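(* Let $\mathcal{I}$ be an interval hypergraph on $[n]$ and $A$ an acyclic orientation of $\mathcal{I}$. (1) Let $B$ be an orientation obtained from $A$ by an increasing flip with respect to $i<j$, and let $k=\max\{\max(I): I\in\mathcal{I},\ A(I)=i\}$. Then $B$ is acyclic if and only if there is no $J\in\mathcal{I}$ with $j\in J\setminus\{A(J)\}$ and $A(J)\in\,]i,k]$. (2) Symmetrically, let $B$ be an orientation obtained from $A$ by a decreasing flip with respect to $j<i$, and let $k=\min\{\min(I): I\in\mathcal{I},\ A(I)=i\}$. Then $B$ is acyclic if and only if there is no $J\in\mathcal{I}$ with $j\in J\setminus\{A(J)\}$ and $A(J)\in[k,i[$.
   Context: An interval hypergraph $\mathcal{I}$ on $[n]$ is a collection of intervals of $[n]$ containing all singletons. An orientation is a map $O:\mathcal{I}\to[n]$ with $O(I)\in I$; it is acyclic if there are no $H_1,\dots,H_k$, $k\ge2$, with $O(H_{i+1})\in H_i\setminus\{O(H_i)\}$ for $i\in[k-1]$ and $O(H_1)\in H_k\setminus\{O(H_k)\}$. For distinct $i,j\in[n]$, an orientation $O'\neq O$ is obtained from $O$ by a flip of $i$ to $j$ if for all $H\in\mathcal{I}$: if $O(H)\ne O'(H)$ then $O(H)=i$ and $O'(H)=j$; and if $\{i,j\}\subseteq H$ then $O(H)=i\iff O'(H)=j$. The flip is increasing if $i<j$ and decreasing if $i>j$. Here $]a,b]=\{a+1,\dots,b\}$ and $[a,b[=\{a,\dots,b-1\}$. *)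

(* Defs.v *)
From mathcomp Require Import all_boot.
Set Implicit Arguments. Unset Strict Implicit. Unset Printing Implicit Defensive.

(* An interval {a, ..., b} of [n] is encoded as the pair (a, b). *)
Definition interval := (nat * nat)%type.

Definition inI (x : nat) (I : interval) : bool := (I.1 <= x <= I.2).

Definition interval_hypergraph (n : nat) (H : seq interval) : Prop :=
  (forall I, I \in H -> [&& 1 <= I.1, I.1 <= I.2 & I.2 <= n]) /\
  (forall x, 1 <= x <= n -> (x, x) \in H).

Definition orientation (H : seq interval) (O : interval -> nat) : Prop :=
  forall I, I \in H -> inI (O I) I.

(* Cycle H_1, ..., H_k (k >= 2, indices 0..k-1 here) with
   O(H_{t+1}) in H_t \ {O(H_t)}, cyclically. *)
Definition has_cycle (H : seq interval) (O : interval -> nat) : Prop :=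
  exists s : seq interval,
    2 <= size s /\ (forall I, I \in s -> I \in H) /\
    forall t, t < size s ->
      let Ht := nth (0, 0) s t in
      let Hn := nth (0, 0) s (t.+1 %% size s) in
      inI (O Hn) Ht /\ O Hn <> O Ht.

Definition acyclic (H : seq interval) (O : interval -> nat) : Prop :=
  ~ has_cycle H O.

Definition flip (H : seq interval) (O O' : interval -> nat) (i j : nat) : Prop :=
  i <> j /\
  (exists I, I \in H /\ O I <> O' I) /\
  (forall I, I \in H -> O I <> O' I -> O I = i /\ O' I = j) /\
  (forall I, I \in H -> inI i I -> inI j I -> (O I = i <-> O' I = j)).

(* Main.v *)
Require Import Defs.
From mathcomp Require Import all_boot zify.
Set Implicit Arguments. Unset Strict Implicit. Unset Printing Implicit Defensive.


Inductive ct (R : nat -> nat -> Prop) : nat -> nat -> Prop :=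
| ct1 x y : R x y -> ct R x y
| ctS x y z : R x y -> ct R y z -> ct R x z.

Notation rt R x y := (x = y \/ ct R x y).

Lemma ct_trans R x y z : ct R x y -> ct R y z -> ct R x z.
Proof. elim=> [a b h|a b c h _ IH] h2; [exact: ctS h h2|exact: ctS h (IH h2)]. Qed.

Lemma ct_snoc R x y z : ct R x y -> R y z -> ct R x z.
Proof. move=> h1 h2; exact: ct_trans h1 (ct1 h2). Qed.

Lemma rt_snoc R x y z : rt R x y -> R y z -> ct R x z.
Proof. case=> [->|h] h2; [exact: ct1|exact: ct_snoc h h2]. Qed.

Lemma rt_cons R x y z : R x y -> rt R y z -> ct R x z.
Proof. move=> h [<-|h2]; [exact: ct1|exact: ctS h h2]. Qed.

Lemma rt_ct R x y z : rt R x y -> ct R y z -> ct R x z.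
Proof. case=> [->//|h] h2; exact: ct_trans h h2. Qed.

Lemma ct_tn1 R x z : ct R x z -> R x z \/ exists y, ct R x y /\ R y z.
Proof.
elim=> [a b h|a b c h _ [IH|[y [h1 h2]]]]; first by left.
  by right; exists b; split=> //; exact: ct1.
by right; exists y; split=> //; exact: ctS h h1.
Qed.

Lemma rt_rt R x y z : rt R x y -> rt R y z -> rt R x z.
Proof.
move=> h1 h2; case: h1 => [->|h1]; first exact: h2.
right; case: h2 => [<-|h2]; [exact: h1|exact: ct_trans h1 h2].
Qed.

Lemma ct_mono (R S : nat -> nat -> Prop) x y :
  (forall a b, R a b -> S a b) -> ct R x y -> ct S x y.
Proof.
move=> hRS; elim=> [a b h|a b c h _ IH]; [exact: ct1 (hRS _ _ h)|exact: ctS (hRS _ _ h) IH].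
Qed.

Lemma rt_mono (R S : nat -> nat -> Prop) x y :
  (forall a b, R a b -> S a b) -> rt R x y -> rt S x y.
Proof. move=> h [->|h2]; [by left|right; exact: ct_mono h h2]. Qed.

Lemma ct_inv (R : nat -> nat -> Prop) (P : nat -> Prop) x v :
  (forall y z, P y -> R y z -> P z) -> ct R x v -> P x -> P v.
Proof. move=> hs; elim=> [a b h|a b c h _ IH] Pa; [exact: hs Pa h|exact: IH (hs _ _ Pa h)]. Qed.

Lemma rt_inv (R : nat -> nat -> Prop) (P : nat -> Prop) x v :
  (forall y z, P y -> R y z -> P z) -> rt R x v -> P x -> P v.
Proof. move=> hs [<-//|h]; exact: ct_inv hs h. Qed.

Lemma decomp (EB : nat -> nat -> Prop) j x y :
  ct EB x y ->
  ct (fun a b => EB a b /\ a <> j) x y \/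
  (rt EB x j /\ exists z, EB j z /\ rt (fun a b => EB a b /\ a <> j) z y).
Proof.
elim=> [a b h|a b c h _ IH].
  have [eaj|hne] := eqVneq a j.
    by subst a; right; split; [left|exists b; split=> //; left].
  by left; apply: ct1; split=> //; apply/eqP.
have [eaj|hne] := eqVneq a j.
  subst a; right; split; first by left.
  case: IH => [h2|[_ hz]]; last by [].
  by exists b; split=> //; right.
case: IH => [h2|[h2 h3]].
  by left; apply: ctS h2; split=> //; apply/eqP.
by right; split=> //; right; exact: rt_cons h h2.
Qed.

Lemma inc_core (EA EB : nat -> nat -> Prop) (S : nat -> Prop) (i j k : nat) :
  i < j -> j <= k ->
  (forall x y, EA x y -> y <> x) ->
  (forall x y, EB x y -> x <> j -> EA x y) ->
  (forall y, EB i y -> y < j) ->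
  (forall y, EB j y -> EA j y \/ (S y /\ y <> j)) ->
  (forall y, S y -> y <= k /\ (y = i \/ EA i y)) ->
  (forall x y z, EA x y -> x < z <= y -> EA x z) ->
  (forall x y z, EA x y -> y <= z < x -> EA x z) ->
  (~ exists u, ct EA u u) ->
  (~ exists x, i < x <= k /\ EA x j) ->
  ~ exists u, ct EB u u.
Proof.
move=> hij hjk Eirr F1a F1b F2 FS Int1 Int2 acA hyp.
set E' := fun a b => EB a b /\ a <> j.
have E'A : forall a b, E' a b -> EA a b by move=> a b [h1 h2]; exact: F1a h1 h2.
have C : forall x, S x -> x <> j -> ~ ct E' x j.
  move=> x Sx xj hx.
  pose P v := rt EA i v /\ (k < v -> exists w, j <= w <= k /\ ct EA w v).
  have KS : forall y z, P y -> E' y z -> P z.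
    move=> y z [Py1 Py2] hyz.
    have eyz := E'A _ _ hyz.
    split; first by right; exact: rt_snoc Py1 eyz.
    move=> kz.
    have [ky|yk] := ltnP k y.
      have [w [hw1 hw2]] := Py2 ky.
      by exists w; split=> //; exact: ct_snoc hw2 eyz.
    have [jy|yj] := leqP j y.
      by exists y; split; [apply/andP; split|exact: ct1].
    have [yi|iy] := eqVneq y i.
      subst y; have := F1b z (proj1 hyz); lia.
    have [yli|iy2] := ltnP y i.
      exfalso; apply: acA; exists i; apply: rt_snoc Py1 _.
      apply: Int1 eyz _; lia.
    exfalso; apply: hyp; exists y; split; first lia.
    apply: Int1 eyz _; lia.
  have Px : P x.
    have [xk xi] := FS x Sx; split; last lia.
    by case: xi => [->|h]; [left|right; exact: ct1].
  have [v' [[Pv1 Pv2] hv']] : exists v, P v /\ E' v j.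
    case: (ct_tn1 hx) => [hv|[v [hxv hv]]]; first by exists x.
    by exists v; split=> //; exact: ct_inv KS hxv Px.
  have evj := E'A _ _ hv'.
  have vj : v' <> j by case: hv'.
  have [vi|vi] := eqVneq v' i; first by (subst v'; have := F1b j (proj1 hv'); lia).
  have [vli|iv] := ltnP v' i.
    by apply: acA; exists i; apply: rt_snoc Pv1 _; apply: Int1 evj _; lia.
  have [kv|vk] := ltnP k v'; last by (apply: hyp; exists v'; split=> //; lia).
  have [w [hw1 hw2]] := Pv2 kv.
  by apply: acA; exists w; apply: ct_snoc hw2 _; apply: Int2 evj _; lia.
move=> [u hu].
case: (decomp j hu) => [h|[hu1 [z [hz1 hz2]]]].
  by apply: acA; exists u; exact: ct_mono E'A h.
have hjj : ct EB j j.
  apply: rt_cons hz1 _.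
  exact: rt_rt (rt_mono (fun a b (h : E' a b) => proj1 h) hz2) hu1.
case: (decomp j hjj) => [h|[_ [z' [hz'1 hz'2]]]].
  have src : forall a b, ct E' a b -> a <> j by move=> a b [c d [_ ?]|c d e [_ ?] _].
  exact: src _ _ h erefl.
case: (F2 _ hz'1) => [h|[Sz zj]].
  by apply: acA; exists j; apply: rt_cons h _; exact: rt_mono E'A hz'2.
by case: hz'2 => [?|h]; [|exact: C Sz zj h].
Qed.

Lemma dec_core (EA EB : nat -> nat -> Prop) (S : nat -> Prop) (i j k : nat) :
  j < i -> k <= j ->
  (forall x y, EA x y -> y <> x) ->
  (forall x y, EB x y -> x <> j -> EA x y) ->
  (forall y, EB i y -> j < y) ->
  (forall y, EB j y -> EA j y \/ (S y /\ y <> j)) ->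
  (forall y, S y -> k <= y /\ (y = i \/ EA i y)) ->
  (forall x y z, EA x y -> x < z <= y -> EA x z) ->
  (forall x y z, EA x y -> y <= z < x -> EA x z) ->
  (~ exists u, ct EA u u) ->
  (~ exists x, k <= x < i /\ EA x j) ->
  ~ exists u, ct EB u u.
Proof.
move=> hij hjk Eirr F1a F1b F2 FS Int1 Int2 acA hyp.
set E' := fun a b => EB a b /\ a <> j.
have E'A : forall a b, E' a b -> EA a b by move=> a b [h1 h2]; exact: F1a h1 h2.
have C : forall x, S x -> x <> j -> ~ ct E' x j.
  move=> x Sx xj hx.
  pose P v := rt EA i v /\ (v < k -> exists w, k <= w <= j /\ ct EA w v).
  have KS : forall y z, P y -> E' y z -> P z.
    move=> y z [Py1 Py2] hyz.
    have eyz := E'A _ _ hyz.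
    split; first by right; exact: rt_snoc Py1 eyz.
    move=> zk.
    have [yk|ky] := ltnP y k.
      have [w [hw1 hw2]] := Py2 yk.
      by exists w; split=> //; exact: ct_snoc hw2 eyz.
    have [yj|jy] := leqP y j.
      by exists y; split; [apply/andP; split|exact: ct1].
    have [yi|iy] := eqVneq y i.
      subst y; have := F1b z (proj1 hyz); lia.
    have [iy2|yli] := ltnP i y.
      exfalso; apply: acA; exists i; apply: rt_snoc Py1 _.
      apply: Int2 eyz _; lia.
    exfalso; apply: hyp; exists y; split; first lia.
    apply: Int2 eyz _; lia.
  have Px : P x.
    have [xk xi] := FS x Sx; split; last lia.
    by case: xi => [->|h]; [left|right; exact: ct1].
  have [v' [[Pv1 Pv2] hv']] : exists v, P v /\ E' v j.
    case: (ct_tn1 hx) => [hv|[v [hxv hv]]]; first by exists x.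
    by exists v; split=> //; exact: ct_inv KS hxv Px.
  have evj := E'A _ _ hv'.
  have vj : v' <> j by case: hv'.
  have [vi|vi] := eqVneq v' i; first by (subst v'; have := F1b j (proj1 hv'); lia).
  have [ilv|vi2] := ltnP i v'.
    by apply: acA; exists i; apply: rt_snoc Pv1 _; apply: Int2 evj _; lia.
  have [vk|kv] := ltnP v' k; last by (apply: hyp; exists v'; split=> //; lia).
  have [w [hw1 hw2]] := Pv2 vk.
  by apply: acA; exists w; apply: ct_snoc hw2 _; apply: Int1 evj _; lia.
move=> [u hu].
case: (decomp j hu) => [h|[hu1 [z [hz1 hz2]]]].
  by apply: acA; exists u; exact: ct_mono E'A h.
have hjj : ct EB j j.
  apply: rt_cons hz1 _.
  exact: rt_rt (rt_mono (fun a b (h : E' a b) => proj1 h) hz2) hu1.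
case: (decomp j hjj) => [h|[_ [z' [hz'1 hz'2]]]].
  have src : forall a b, ct E' a b -> a <> j by move=> a b [c d [_ ?]|c d e [_ ?] _].
  exact: src _ _ h erefl.
case: (F2 _ hz'1) => [h|[Sz zj]].
  by apply: acA; exists j; apply: rt_cons h _; exact: rt_mono E'A hz'2.
by case: hz'2 => [?|h]; [|exact: C Sz zj h].
Qed.


Definition E (H : seq interval) (O : interval -> nat) u w :=
  exists I : nat * nat, I \in H /\ O I = u /\ inI w I /\ w <> u.

Definition chain (H : seq interval) (O : interval -> nat) x y (s : seq interval) :=
  [/\ 0 < size s, (forall I, I \in s -> I \in H), O (nth (0,0) s 0) = x,
   (forall t, t.+1 < size s ->
      inI (O (nth (0,0) s t.+1)) (nth (0,0) s t) /\ O (nth (0,0) s t.+1) <> O (nth (0,0) s t))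
   & inI y (nth (0,0) s (size s).-1) /\ y <> O (nth (0,0) s (size s).-1)].

Lemma ct_chain H O x y : ct (E H O) x y -> exists s, chain H O x y s.
Proof.
elim=> [a b [I [IH [OI [hb hba]]]]|a b c [I [IH [OI [hb hba]]]] _ [s [s0 sH s1 s2 s3]]].
  exists [:: I]; split=> //; first by move=> J; rewrite inE => /eqP ->.
  by rewrite /= OI.
exists (I :: s); split=> //.
- by move=> J; rewrite inE => /orP [/eqP ->|]; [|exact: sH].
- case=> [|t] /= ht; first by rewrite s1; split=> //; rewrite OI.
  exact: s2.
- by case: s s0 s1 s2 s3 {sH}.
Qed.

Lemma cycle_iff H O : has_cycle H O <-> exists u, ct (E H O) u u.
Proof.
split.
  move=> [s [s2 [sH hs]]].
  set m := size s.
  pose w t := O (nth (0,0) s (t %% m)).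
  have Ew : forall t, t < m -> E H O (w t) (w t.+1).
    move=> t tm; have [h1 h2] := hs t tm.
    exists (nth (0,0) s t); split; first by apply: sH; apply: mem_nth.
    by rewrite /w (modn_small tm).
  have key : forall t, t < m -> ct (E H O) (w 0) (w t.+1).
    elim=> [|t IH] tm; first exact: ct1 (Ew 0 _).
    apply: ct_snoc (IH _) (Ew _ tm); lia.
  exists (w 0); have := key m.-1; rewrite prednK; last lia.
  have -> : w m = w 0 by rewrite /w modnn mod0n.
  apply; lia.
move=> [u /ct_chain [s [s0 sH s1 s2 [s3 s4]]]].
have sz : 2 <= size s.
  case: s s0 s1 s3 s4 {sH s2} => [|I [|J s']] //= _ <- _; by [].
exists s; split=> //; split=> //.
move=> t ht /=.
have [tl|tl] := ltnP t.+1 (size s).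
  by rewrite modn_small //; have [h1 h2] := s2 t tl; split=> // h; apply: h2.
have et : t = (size s).-1 by lia.
have -> : t.+1 %% size s = 0 by rewrite et prednK ?modnn //; lia.
by rewrite s1 et; split=> // h; apply: s4.
Qed.


Lemma bigmax_att (r : seq interval) (P : pred interval) (F : interval -> nat) :
  \max_(I <- r | P I) F I = 0 \/
  exists I, I \in r /\ P I /\ F I = \max_(I <- r | P I) F I.
Proof.
elim: r => [|a r IH]; first by left; rewrite big_nil.
rewrite big_cons; case: ifP => Pa; last first.
  case: IH => [->|[I [Ir [PI FI]]]]; first by left.
  by right; exists I; rewrite inE Ir orbT.
case: IH => [->|[I [Ir [PI FI]]]].
  by right; exists a; rewrite inE eqxx maxn0.
rewrite -FI; have [le|lt] := leqP (F a) (F I).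
  by right; exists I; rewrite inE Ir orbT; split=> //; split=> //; lia.
by right; exists a; rewrite inE eqxx; split=> //; split=> //; lia.
Qed.

Lemma bigmin_att (n : nat) (r : seq interval) (P : pred interval) (F : interval -> nat) :
  \big[minn/n]_(I <- r | P I) F I = n \/
  exists I, I \in r /\ P I /\ F I = \big[minn/n]_(I <- r | P I) F I.
Proof.
elim: r => [|a r IH]; first by left; rewrite big_nil.
rewrite big_cons; case: ifP => Pa; last first.
  case: IH => [->|[I [Ir [PI FI]]]]; first by left.
  by right; exists I; rewrite inE Ir orbT.
case: IH => [->|[I [Ir [PI FI]]]].
  have [le|lt] := leqP (F a) n.
    by right; exists a; rewrite inE eqxx; split=> //; split=> //; lia.
  by left; lia.
rewrite -FI; have [le|lt] := leqP (F a) (F I).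
  by right; exists a; rewrite inE eqxx; split=> //; split=> //; lia.
by right; exists I; rewrite inE Ir orbT; split=> //; split=> //; lia.
Qed.

Lemma bigmin_le (n : nat) (r : seq interval) (P : pred interval) (F : interval -> nat) I :
  I \in r -> P I -> \big[minn/n]_(I <- r | P I) F I <= F I.
Proof.
elim: r => [|a r IH] //; rewrite inE big_cons => /orP [/eqP <-|Ir] PI.
  by rewrite PI; lia.
case: ifP => _; last exact: IH.
have := IH Ir PI; lia.
Qed.

Lemma AB_eq H A B i j I : flip H A B i j -> I \in H -> B I <> j -> A I = B I.
Proof.
move=> [_ [_ [Hch _]]] IH Bj; have [//|ne] := eqVneq (A I) (B I).
by have [_ ?] := Hch I IH (elimN eqP ne).
Qed.

Lemma AB_ne H A B i j I : flip H A B i j -> I \in H -> A I <> i -> A I = B I.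
Proof.
move=> [_ [_ [Hch _]]] IH Ai; have [//|ne] := eqVneq (A I) (B I).
by have [? _] := Hch I IH (elimN eqP ne).
Qed.

Ltac unI := rewrite /inI in *; repeat match goal with h : is_true (_ && _) |- _ => case/andP: h => ? ? end.


Lemma part1 (n : nat) (H : seq interval) (A : interval -> nat) :
  interval_hypergraph n H -> orientation H A -> acyclic H A ->
  (forall (B : interval -> nat) (i j : nat),
     1 <= i -> i < j -> j <= n -> orientation H B -> flip H A B i j ->
     let k := \max_(I <- H | A I == i) I.2 in
     acyclic H B <->
     ~ (exists J, [/\ J \in H, inI j J, j != A J & i < A J <= k])).
Proof.
move=> [Hint Hsing] HA HacA B i j hi hij hjn HB hfl k.
have hfl' := hfl; move: hfl' => [hne [[I1 [I1H I1d]] [Hch Hiff]]].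
have kmax : forall I : nat * nat, I \in H -> A I = i -> I.2 <= k.
  by move=> I IH AI; rewrite /k; apply: leq_bigmax_seq => //; apply/eqP.
have [A1 B1] := Hch I1 I1H I1d.
have jk : j <= k.
  have := HB I1 I1H; rewrite B1 => /andP [_ h]; have := kmax I1 I1H A1; lia.
have [I0 [I0H [I0i I0k]]] : exists I0 : nat * nat, I0 \in H /\ A I0 = i /\ I0.2 = k.
  case: (bigmax_att H (fun I => A I == i) (fun I => I.2)) => [h|[I [IH [/eqP AI e]]]].
    move: h; rewrite -/k => h; lia.
  by exists I.
have iI0 := HA I0 I0H; rewrite I0i in iI0.
have jI0 : inI j I0 by move: iI0; rewrite /inI => /andP [h1 h2]; apply/andP; split; lia.
have BI0 : B I0 = j by apply/(Hiff I0 I0H iI0 jI0).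
split.
  move=> acB [J [JH jJ jA /andP [iA Ak]]]; apply: acB; apply/cycle_iff.
  have BJ : A J = B J by apply: (AB_ne hfl JH); lia.
  exists (A J); apply: (ctS (y := j)).
    exists J; split=> //; split; first by rewrite BJ.
    by split=> //; apply/eqP.
  apply: ct1; exists I0; split=> //; split=> //; split.
    by move: iI0; rewrite /inI => /andP [h1 h2]; apply/andP; split; lia.
  by move/eqP: jA => jA e; apply: jA.
move=> hno /cycle_iff.
apply: (inc_core (EA := E H A) (EB := E H B)
          (S := fun y => exists I : nat * nat, I \in H /\ A I = i /\ inI y I) hij jk).
- by move=> x y [I [_ [_ [_ h]]]].
- move=> x y [I [IH [BI [yI yx]]]] xj; exists I; split=> //; split=> //.
  by rewrite (AB_eq hfl IH) // BI.
- move=> y [I [IH [BI [yI yi]]]].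
  have AI : A I = i by rewrite (AB_eq hfl IH) // BI => e; exact: hne e.
  have iI := HA I IH; rewrite AI in iI.
  have [jle|lt] := leqP j I.2.
    have jI : inI j I by move: iI; rewrite /inI => /andP [h1 h2]; apply/andP; split; lia.
    have := (proj1 (Hiff I IH iI jI) AI); rewrite BI => e; by case: (hne e).
  by move: yI; rewrite /inI => /andP [h1 h2]; lia.
- move=> y [I [IH [BI [yI yj]]]].
  have [e|ne] := eqVneq (A I) (B I).
    by left; exists I; rewrite e.
  have [AI _] := Hch I IH (elimN eqP ne).
  by right; split=> //; exists I.
- move=> y [I [IH [AI yI]]]; split.
    by have := kmax I IH AI; move: yI; rewrite /inI => /andP [h1 h2]; lia.
  have [->|ne] := eqVneq y i; first by left.
  by right; exists I; split=> //; split=> //; split=> //; apply/eqP.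
- move=> x y z [I [IH [AI [yI yx]]]] hz; exists I; split=> //; split=> //.
  have := HA I IH; rewrite AI; move: yI; rewrite /inI => /andP [h1 h2] /andP [h3 h4].
  split; [apply/andP; split|]; lia.
- move=> x y z [I [IH [AI [yI yx]]]] hz; exists I; split=> //; split=> //.
  have := HA I IH; rewrite AI; move: yI; rewrite /inI => /andP [h1 h2] /andP [h3 h4].
  split; [apply/andP; split|]; lia.
- by move=> h; apply: HacA; apply/cycle_iff.
- move=> [x [xr [I [IH [AI [jI jx]]]]]]; apply: hno; exists I; split=> //.
  + by apply/eqP; rewrite AI => e; apply: jx.
  + by rewrite AI.
Qed.

Lemma part2 (n : nat) (H : seq interval) (A : interval -> nat) :
  interval_hypergraph n H -> orientation H A -> acyclic H A ->
  (forall (B : interval -> nat) (i j : nat),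
     1 <= j -> j < i -> i <= n -> orientation H B -> flip H A B i j ->
     let k := \big[minn/n]_(I <- H | A I == i) I.1 in
     acyclic H B <->
     ~ (exists J, [/\ J \in H, inI j J, j != A J & k <= A J < i])).
Proof.
move=> [Hint Hsing] HA HacA B i j hi hij hjn HB hfl k.
have hfl' := hfl; move: hfl' => [hne [[I1 [I1H I1d]] [Hch Hiff]]].
have kmax : forall I : nat * nat, I \in H -> A I = i -> k <= I.1.
  by move=> I IH AI; rewrite /k; apply: bigmin_le => //; apply/eqP.
have [A1 B1] := Hch I1 I1H I1d.
have jk : k <= j.
  have := HB I1 I1H; rewrite B1 => /andP [h _]; have := kmax I1 I1H A1; lia.
have [I0 [I0H [I0i I0k]]] : exists I0 : nat * nat, I0 \in H /\ A I0 = i /\ I0.1 = k.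
  case: (bigmin_att n H (fun I => A I == i) (fun I => I.1)) => [h|[I [IH [/eqP AI e]]]].
    move: h; rewrite -/k => h; lia.
  by exists I.
have iI0 := HA I0 I0H; rewrite I0i in iI0.
have jI0 : inI j I0 by move: iI0; rewrite /inI => /andP [h1 h2]; apply/andP; split; lia.
have BI0 : B I0 = j by apply/(Hiff I0 I0H iI0 jI0).
split.
  move=> acB [J [JH jJ jA /andP [iA Ak]]]; apply: acB; apply/cycle_iff.
  have BJ : A J = B J by apply: (AB_ne hfl JH); lia.
  exists (A J); apply: (ctS (y := j)).
    exists J; split=> //; split; first by rewrite BJ.
    by split=> //; apply/eqP.
  apply: ct1; exists I0; split=> //; split=> //; split.
    by move: iI0; rewrite /inI => /andP [h1 h2]; apply/andP; split; lia.
  by move/eqP: jA => jA e; apply: jA.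
move=> hno /cycle_iff.
apply: (dec_core (EA := E H A) (EB := E H B)
          (S := fun y => exists I : nat * nat, I \in H /\ A I = i /\ inI y I) hij jk).
- by move=> x y [I [_ [_ [_ h]]]].
- move=> x y [I [IH [BI [yI yx]]]] xj; exists I; split=> //; split=> //.
  by rewrite (AB_eq hfl IH) // BI.
- move=> y [I [IH [BI [yI yi]]]].
  have AI : A I = i by rewrite (AB_eq hfl IH) // BI => e; exact: hne e.
  have iI := HA I IH; rewrite AI in iI.
  have [jle|lt] := leqP I.1 j.
    have jI : inI j I by move: iI; rewrite /inI => /andP [h1 h2]; apply/andP; split; lia.
    have := (proj1 (Hiff I IH iI jI) AI); rewrite BI => e; by case: (hne e).
  by move: yI; rewrite /inI => /andP [h1 h2]; lia.
- move=> y [I [IH [BI [yI yj]]]].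
  have [e|ne] := eqVneq (A I) (B I).
    by left; exists I; rewrite e.
  have [AI _] := Hch I IH (elimN eqP ne).
  by right; split=> //; exists I.
- move=> y [I [IH [AI yI]]]; split.
    by have := kmax I IH AI; move: yI; rewrite /inI => /andP [h1 h2]; lia.
  have [->|ne] := eqVneq y i; first by left.
  by right; exists I; split=> //; split=> //; split=> //; apply/eqP.
- move=> x y z [I [IH [AI [yI yx]]]] hz; exists I; split=> //; split=> //.
  have := HA I IH; rewrite AI; move: yI; rewrite /inI => /andP [h1 h2] /andP [h3 h4].
  split; [apply/andP; split|]; lia.
- move=> x y z [I [IH [AI [yI yx]]]] hz; exists I; split=> //; split=> //.
  have := HA I IH; rewrite AI; move: yI; rewrite /inI => /andP [h1 h2] /andP [h3 h4].
  split; [apply/andP; split|]; lia.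
- by move=> h; apply: HacA; apply/cycle_iff.
- move=> [x [xr [I [IH [AI [jI jx]]]]]]; apply: hno; exists I; split=> //.
  + by apply/eqP; rewrite AI => e; apply: jx.
  + by rewrite AI.
Qed.

Theorem proposition3p15 (n : nat) (H : seq interval) (A : interval -> nat) :
  interval_hypergraph n H -> orientation H A -> acyclic H A ->
  (forall (B : interval -> nat) (i j : nat),
     1 <= i -> i < j -> j <= n -> orientation H B -> flip H A B i j ->
     let k := \max_(I <- H | A I == i) I.2 in
     acyclic H B <->
     ~ (exists J, [/\ J \in H, inI j J, j != A J & i < A J <= k]))
  /\
  (forall (B : interval -> nat) (i j : nat),
     1 <= j -> j < i -> i <= n -> orientation H B -> flip H A B i j ->
     let k := \big[minn/n]_(I <- H | A I == i) I.1 in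
     acyclic H B <->
     ~ (exists J, [/\ J \in H, inI j J, j != A J & k <= A J < i])).
Proof.
move=> hH hA hac; split; [exact: part1 hH hA hac|exact: part2 hH hA hac].
Qed.
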